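(* Let $\mathcal{X}$ be a set, let $k$ be a strong kernel on $\mathcal{X}$, and let $n\in\mathbb{N}$. Then the optimal assignment kernel $K^k_{\mathfrak{B}}$ on the set $[\mathcal{X}]^n$ of all $n$-element subsets of $\mathcal{X}$ is a valid kernel, i.e. it is symmetric and for every finite collection $X_1,\dots,X_m\in[\mathcal{X}]^n$ the matrix $\big(K^k_{\mathfrak{B}}(X_i,X_j)\big)_{i,j=1}^m$ is positive semidefinite.
   Context: A strong kernel on a set $\mathcal{X}$ is a symmetric function $k:\mathcal{X}\times\mathcal{X}\to\mathbb{R}_{\ge 0}$ such that $k(x,y)\ge\min\{k(x,z),k(z,y)\}$ for all $x,y,z\in\mathcal{X}$. For $X,Y\in[\mathcal{X}]^n$, $\mathfrak{B}(X,Y)$ is the set of all bijections between $X$ and $Y$ (viewed as sets of pairs $(x,y)$), and the optimal assignment kernel is $K^k_{\mathfrak{B}}(X,Y)=\max_{B\in\mathfrak{B}(X,Y)}\sum_{(x,y)\in B}k(x,y)$. *)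

(* Defs.v *)
From HB Require Import structures.
From mathcomp Require Import all_boot all_order all_algebra all_fingroup.
Set Implicit Arguments. Unset Strict Implicit. Unset Printing Implicit Defensive.
Import Order.TTheory GRing.Theory Num.Theory.
Local Open Scope ring_scope.

Definition strong_kernel (R : realFieldType) (T : Type) (k : T -> T -> R) : Prop :=
  [/\ (forall x y, k x y = k y x),
      (forall x y, 0 <= k x y) &
      (forall x y z, Num.min (k x z) (k z y) <= k x y)].

(* An n-element subset of T is represented by an injective enumeration
   'I_n -> T.  Bijections between X = {x i} and Y = {y j} correspond
   exactly to permutations s of 'I_n via x i |-> y (s i). *)
Definition nsubset (T : Type) (n : nat) (x : 'I_n -> T) : Prop := injective x.

(* Optimal assignment kernel: maximum over all bijections of the total weight.
   Since k >= 0, every sum is >= 0 and 'S_n is nonempty, so folding Num.max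
   from 0 gives exactly the maximum. *)
Definition oa_kernel (R : realFieldType) (T : Type) (k : T -> T -> R) (n : nat)
    (x y : 'I_n -> T) : R :=
  \big[Num.max/0]_(s : 'S_n) \sum_(i < n) k (x i) (y (s i)).

(* Main.v *)
Require Import Defs.
From HB Require Import structures.
From mathcomp Require Import all_boot all_order all_algebra all_fingroup zify.
Import Order.TTheory GRing.Theory Num.Theory.
Local Open Scope ring_scope.
Set Implicit Arguments. Unset Strict Implicit. Unset Printing Implicit Defensive.

Lemma sk_sym (R : realFieldType) T (k : T -> T -> R) :
  strong_kernel k -> forall x y, k x y = k y x.
Proof. by case. Qed.

Lemma sk_trans (R : realFieldType) T (k : T -> T -> R) t x y z :
  strong_kernel k -> t <= k x z -> t <= k z y -> t <= k x y.
Proof. case=> _ _ H h1 h2; apply: le_trans (H x y z); by rewrite le_min h1 h2. Qed.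

Definition cnt (R : realFieldType) T (k : T -> T -> R) n (t : R) (X : 'I_n -> T) (z : T) : nat :=
  (\sum_(a < n) nat_of_bool (t <= k (X a) z)%R)%N.
Definition cls (R : realFieldType) T (k : T -> T -> R) (I : finType) (P : I -> T) (t : R) (u : I) : nat :=
  (\sum_(v : I) nat_of_bool (t <= k (P u) (P v))%R)%N.
Definition MM (R : realFieldType) T (k : T -> T -> R) n (I : finType) (P : I -> T) (t : R)
  (X Y : 'I_n -> T) : R :=
  \sum_(u : I) (minn (cnt k t X (P u)) (cnt k t Y (P u)))%:R / (cls k P t u)%:R :> R.
Definition NN (R : realFieldType) T (k : T -> T -> R) n (t : R) (X Y : 'I_n -> T) (s : 'S_n) : nat :=
  (\sum_(a < n) nat_of_bool (t <= k (X a) (Y (s a)))%R)%N.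
Definition MT (R : realFieldType) T (k : T -> T -> R) n (I : finType) (P : I -> T) (t : R)
  (X Y : 'I_n -> T) (s : 'S_n) (u : I) : nat :=
  (\sum_(a < n) nat_of_bool ((t <= k (P u) (X a)) && (t <= k (X a) (Y (s a))))%R)%N.

Lemma A_eq (R : realFieldType) T (k : T -> T -> R) n (I : finType) (P : I -> T) t
  (X Y : 'I_n -> T) (s : 'S_n) :
  strong_kernel k -> (forall a, exists u, X a = P u) ->
  (NN k t X Y s)%:R = \sum_(u : I) (MT k P t X Y s u)%:R / (cls k P t u)%:R :> R.
Proof.
move=> Hk HX.
rewrite /NN /MT natr_sum.
under [RHS]eq_bigr do rewrite natr_sum mulr_suml.
rewrite exchange_big /=; apply: eq_bigr => a _.
case Hb: (t <= k (X a) (Y (s a))); last first.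
  by rewrite /= big1 // => u _; rewrite andbF mul0r.
have Hxx : t <= k (X a) (X a).
  by apply: (sk_trans Hk Hb); rewrite (sk_sym Hk).
set cX := (\sum_(v : I) nat_of_bool (t <= k (X a) (P v))%R)%N.
have Hc : forall u, t <= k (P u) (X a) -> cls k P t u = cX.
  move=> u Hu; rewrite /cls /cX; apply: eq_bigr => v _.
  case H1: (t <= k (P u) (P v)); case H2: (t <= k (X a) (P v)) => //.
  - by move: H2; rewrite (sk_trans Hk _ H1) // (sk_sym Hk).
  - by move: H1; rewrite (sk_trans Hk Hu H2).
have -> : \sum_(u : I) (nat_of_bool ((t <= k (P u) (X a)) && true))%:R / (cls k P t u)%:R
   = \sum_(u : I) (nat_of_bool (t <= k (X a) (P u)))%:R / cX%:R :> R.
  apply: eq_bigr => u _; rewrite andbT.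
  case Hu: (t <= k (P u) (X a)); first by rewrite Hc // -(sk_sym Hk) Hu.
  by rewrite (sk_sym Hk) Hu /= !mul0r.
rewrite -mulr_suml -natr_sum -/cX /= divff //.
have [u0 Hu0] := HX a.
rewrite pnatr_eq0 -lt0n /cX (bigD1 u0) //= -Hu0 Hxx.
by [].
Qed.

Lemma cnt_le (R : realFieldType) T (k : T -> T -> R) n t (X : 'I_n -> T) z : (cnt k t X z <= n)%N.
Proof.
apply: (@leq_trans (\sum_(a < n) 1)%N); first by apply: leq_sum => a _; case: (_ <= _).
by rewrite sum1_card card_ord.
Qed.

Lemma NN_le (R : realFieldType) T (k : T -> T -> R) n t (X Y : 'I_n -> T) s : (NN k t X Y s <= n)%N.
Proof.
apply: (@leq_trans (\sum_(a < n) 1)%N); first by apply: leq_sum => a _; case: (_ <= _).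
by rewrite sum1_card card_ord.
Qed.

Lemma MT_leX (R : realFieldType) T (k : T -> T -> R) n (I : finType) (P : I -> T) t
  (X Y : 'I_n -> T) (s : 'S_n) u : strong_kernel k ->
  (MT k P t X Y s u <= cnt k t X (P u))%N.
Proof.
move=> Hk; apply: leq_sum => a _.
case H1: (t <= k (P u) (X a)) => //=.
by rewrite (sk_sym Hk (X a) (P u)) H1; case: (_ <= _)%R.
Qed.

Lemma MT_reindex (R : realFieldType) T (k : T -> T -> R) n (I : finType) (P : I -> T) t
  (X Y : 'I_n -> T) (s : 'S_n) u : strong_kernel k ->
  MT k P t X Y s u = (\sum_(b < n) nat_of_bool ((t <= k (P u) (X ((s^-1)%g b))) && (t <= k (P u) (Y b)))%R)%N.
Proof.
move=> Hk; rewrite /MT (reindex_inj (@perm_inj _ (s^-1)%g)) /=.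
apply: eq_bigr => b _; rewrite permKV.
case H1: (t <= k (P u) (X ((s^-1)%g b))) => //=.
case H2: (t <= k (X ((s^-1)%g b)) (Y b)); case H3: (t <= k (P u) (Y b)) => //.
- by move: H3; rewrite (sk_trans Hk H1 H2).
- by move: H2; rewrite (sk_trans Hk _ H3) // (sk_sym Hk).
Qed.

Lemma MT_leY (R : realFieldType) T (k : T -> T -> R) n (I : finType) (P : I -> T) t
  (X Y : 'I_n -> T) (s : 'S_n) u : strong_kernel k ->
  (MT k P t X Y s u <= cnt k t Y (P u))%N.
Proof.
move=> Hk; rewrite MT_reindex //; apply: leq_sum => b _.
case: (_ <= _) => //=; rewrite (sk_sym Hk); by case: (_ <= _).
Qed.

Lemma A_le (R : realFieldType) T (k : T -> T -> R) n (I : finType) (P : I -> T) t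
  (X Y : 'I_n -> T) (s : 'S_n) :
  strong_kernel k -> (forall a, exists u, X a = P u) ->
  (NN k t X Y s)%:R <= MM k P t X Y.
Proof.
move=> Hk HX; rewrite (A_eq _ _ _ Hk HX) /MM; apply: ler_sum => u _.
apply: ler_wpM2r; first by rewrite invr_ge0 ler0n.
by rewrite ler_nat leq_min MT_leX // MT_leY.
Qed.

Lemma exists_ltR (R : realFieldType) (I : finType) (f g : I -> R) :
  \sum_(i : I) f i < \sum_(i : I) g i -> exists i, f i < g i.
Proof.
move=> H; case: (pickP (fun i => f i < g i)) => [i Hi|Hn]; first by exists i.
move: H; rewrite ltNge => /negP; case; apply: ler_sum => i _.
by rewrite leNgt Hn.
Qed.

Lemma exists_ltN (I : finType) (f g : I -> nat) :
  (\sum_(i : I) f i < \sum_(i : I) g i)%N -> exists i, (f i < g i)%N.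
Proof.
move=> H; case: (pickP (fun i => f i < g i)%N) => [i Hi|Hn]; first by exists i.
move: H; rewrite ltnNge => /negP; case; apply: leq_sum => i _.
by rewrite leqNgt Hn.
Qed.

Lemma B_exch (R : realFieldType) T (k : T -> T -> R) n (I : finType) (P : I -> T) t
  (X Y : 'I_n -> T) (s : 'S_n) :
  strong_kernel k -> (forall a, exists u, X a = P u) ->
  (NN k t X Y s)%:R < MM k P t X Y ->
  exists a b, [/\ ~~ (t <= k (X a) (Y (s a))), ~~ (t <= k (X ((s^-1)%g b)) (Y b)) &
                  t <= k (X a) (Y b)].
Proof.
move=> Hk HX; rewrite (A_eq _ _ _ Hk HX) /MM => /exists_ltR [u Hu].
have Hm : (MT k P t X Y s u < minn (cnt k t X (P u)) (cnt k t Y (P u)))%N.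
  rewrite ltnNge; apply/negP => H; move: Hu; rewrite ltNge => /negP; apply.
  by apply: ler_wpM2r; [rewrite invr_ge0 ler0n | rewrite ler_nat].
move: Hm; rewrite leq_min => /andP [H1 H2].
move: H1; rewrite /MT /cnt => /exists_ltN [a Ha].
move: H2; rewrite MT_reindex // /cnt => /exists_ltN [b Hb].
exists a, b.
move: Ha; case Ha1: (t <= k (X a) (P u)) => //; rewrite ltnS leqn0.
rewrite (sk_sym Hk (P u)) Ha1 /= => /eqP Ha2.
move: Hb; case Hb1: (t <= k (Y b) (P u)) => //; rewrite ltnS leqn0.
rewrite (sk_sym Hk (P u) (Y b)) Hb1 andbT => /eqP Hb2.
split.
- by apply/negP => H; move: Ha2; rewrite H.
- apply/negP => H; move: Hb2.
  have Hub : t <= k (P u) (Y b) by rewrite (sk_sym Hk) Hb1.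
  have Hbx : t <= k (Y b) (X ((s^-1)%g b)) by rewrite (sk_sym Hk) H.
  by rewrite (sk_trans Hk Hub Hbx).
- have Hub : t <= k (P u) (Y b) by rewrite (sk_sym Hk) Hb1.
  exact: (sk_trans Hk Ha1 Hub).
Qed.

Lemma C_pt (R : realFieldType) T (k : T -> T -> R) n (X Y : 'I_n -> T) (s : 'S_n) t t' a b x :
  ~~ (t <= k (X a) (Y (s a))) -> ~~ (t <= k (X ((s^-1)%g b)) (Y b)) -> t <= t' ->
  (nat_of_bool (t' <= k (X x) (Y (s x)))%R <=
   nat_of_bool (t' <= k (X x) (Y ((tperm a ((s^-1)%g b) * s)%g x)))%R)%N.
Proof.
move=> H1 H2 Htt.
have F : forall z w, ~~ (t <= k z w) -> ~~ (t' <= k z w).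
  move=> z w; apply: contra => H; exact: le_trans Htt H.
case: (eqVneq x a) => [->|Hxa]; first by rewrite (negbTE (F _ _ H1)).
case: (eqVneq x ((s^-1)%g b)) => [->|Hxb].
  by rewrite permKV (negbTE (F _ _ H2)).
by rewrite permM tpermD // eq_sym.
Qed.

Lemma C_le (R : realFieldType) T (k : T -> T -> R) n (X Y : 'I_n -> T) (s : 'S_n) t t' a b :
  ~~ (t <= k (X a) (Y (s a))) -> ~~ (t <= k (X ((s^-1)%g b)) (Y b)) -> t <= t' ->
  (NN k t' X Y s <= NN k t' X Y (tperm a ((s^-1)%g b) * s)%g)%N.
Proof. move=> H1 H2 Htt; apply: leq_sum => x _. exact: (@C_pt _ _ k n X Y s t t' a b x H1 H2 Htt). Qed.

Lemma C_lt (R : realFieldType) T (k : T -> T -> R) n (X Y : 'I_n -> T) (s : 'S_n) t a b :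
  ~~ (t <= k (X a) (Y (s a))) -> ~~ (t <= k (X ((s^-1)%g b)) (Y b)) -> t <= k (X a) (Y b) ->
  (NN k t X Y s < NN k t X Y (tperm a ((s^-1)%g b) * s)%g)%N.
Proof.
move=> H1 H2 H3; rewrite /NN (bigD1 a) //= [X in (_ < X)%N](bigD1 a) //=.
rewrite (negbTE H1) permM tpermL permKV H3 add0n add1n ltnS.
by apply: leq_sum => x _; exact: (@C_pt _ _ k n X Y s t t a b x H1 H2 (lexx t)).
Qed.

Lemma improve (R : realFieldType) T (k : T -> T -> R) n (I : finType) (P : I -> T)
  (X Y : 'I_n -> T) (s : 'S_n) t0 (L : seq R) :
  strong_kernel k -> (forall a, exists u, X a = P u) ->
  (forall t, t \in L -> t0 <= t) ->
  (forall t, t \in L -> (NN k t X Y s)%:R = MM k P t X Y) ->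
  (NN k t0 X Y s)%:R != MM k P t0 X Y ->
  exists s', (forall t, t \in L -> (NN k t X Y s')%:R = MM k P t X Y) /\
             (NN k t0 X Y s < NN k t0 X Y s')%N.
Proof.
move=> Hk HX HL HE Hne.
have Hlt : (NN k t0 X Y s)%:R < MM k P t0 X Y by rewrite lt_neqAle Hne A_le.
have [a [b [H1 H2 H3]]] := B_exch Hk HX Hlt.
exists (tperm a ((s^-1)%g b) * s)%g; split; last exact: C_lt.
move=> t Ht; apply/eqP; rewrite eq_le A_le // -(HE t Ht) ler_nat.
exact: C_le H1 H2 (HL t Ht).
Qed.

Lemma exist_opt (R : realFieldType) T (k : T -> T -> R) n (I : finType) (P : I -> T)
  (X Y : 'I_n -> T) (L : seq R) :
  strong_kernel k -> (forall a, exists u, X a = P u) -> sorted <=%R L ->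
  exists s, forall t, t \in L -> (NN k t X Y s)%:R = MM k P t X Y.
Proof.
move=> Hk HX; elim: L => [|t0 L IH] /= HS; first by exists 1%g.
have HL : forall t, t \in L -> t0 <= t.
  by move=> t Ht; move: (order_path_min (@le_trans _ R) HS) => /allP; apply.
have [s0 Hs0] := IH (path_sorted HS).
suff : forall d (s : 'S_n), (n - NN k t0 X Y s <= d)%N ->
    (forall t, t \in L -> (NN k t X Y s)%:R = MM k P t X Y) ->
    exists s, forall t, t \in t0 :: L -> (NN k t X Y s)%:R = MM k P t X Y.
  by move=> H; apply: (H n s0) => //; rewrite leq_subr.
elim=> [|d IHd] s Hd HsL.
  case: (eqVneq ((NN k t0 X Y s)%:R) (MM k P t0 X Y)) => [E|Ne].
    by exists s => t; rewrite in_cons => /orP [/eqP ->|]; [|apply: HsL].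
  have [s' [_ Hlt]] := improve Hk HX HL HsL Ne.
  have := NN_le k t0 X Y s'; lia.
case: (eqVneq ((NN k t0 X Y s)%:R) (MM k P t0 X Y)) => [E|Ne].
  by exists s => t; rewrite in_cons => /orP [/eqP ->|]; [|apply: HsL].
have [s' [Hs' Hlt]] := improve Hk HX HL HsL Ne.
apply: (IHd s') => //.
have := NN_le k t0 X Y s'; lia.
Qed.

Fixpoint lev (R : realFieldType) (p : R) (s : seq R) : seq (R * R) :=
  if s is t :: s' then (t - p, t) :: lev t s' else [::].

Lemma lev_mem (R : realFieldType) (s : seq R) p q : q \in lev p s -> q.2 \in s.
Proof.
elim: s p => [|t s IH] p //=; rewrite in_cons => /orP [/eqP -> /=|H].
  by rewrite mem_head.
by rewrite in_cons (IH t H) orbT.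
Qed.

Lemma lev_ge0 (R : realFieldType) (s : seq R) p q : path <=%R p s -> q \in lev p s -> 0 <= q.1.
Proof.
elim: s p => [|t s IH] p //= /andP [Hpt Hs]; rewrite in_cons => /orP [/eqP -> /=|H].
  by rewrite subr_ge0.
exact: IH Hs H.
Qed.

Lemma lev_zero (R : realFieldType) (s : seq R) p v :
  (forall u, u \in s -> v < u) ->
  \sum_(q <- lev p s) q.1 * (nat_of_bool (q.2 <= v))%:R = 0.
Proof.
elim: s p => [|t s IH] p /= H; first by rewrite big_nil.
rewrite big_cons /= leNgt H ?mem_head //= mulr0 add0r IH // => u Hu.
by apply: H; rewrite in_cons Hu orbT.
Qed.

Lemma lev_dec (R : realFieldType) (s : seq R) p v :
  path <=%R p s -> p <= v -> v \in s ->
  \sum_(q <- lev p s) q.1 * (nat_of_bool (q.2 <= v))%:R = v - p.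
Proof.
elim: s p => [|t s IH] p //= /andP [Hpt Hs] Hpv; rewrite in_cons big_cons /=.
have Hmin : forall u, u \in s -> t <= u.
  by move=> u Hu; move: (order_path_min (@le_trans _ R) Hs) => /allP; apply.
case: (boolP (v \in s)) => Hvs.
  have Htv := Hmin v Hvs.
  by rewrite Htv mulr1 (IH t Hs Htv Hvs) addrC subrKA.
rewrite orbF => /eqP Ev; subst v.
rewrite lexx mulr1 lev_zero ?addr0 // => u Hu.
rewrite lt_neqAle Hmin // andbT; apply/negP => /eqP E; subst u.
by rewrite Hu in Hvs.
Qed.

Definition GG (R : realFieldType) T (k : T -> T -> R) n (I : finType) (P : I -> T)
  (L : seq (R * R)) (X Y : 'I_n -> T) : R :=
  \sum_(q <- L) q.1 * MM k P q.2 X Y.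

Lemma MM_ge0 (R : realFieldType) T (k : T -> T -> R) n (I : finType) (P : I -> T) t (X Y : 'I_n -> T) :
  0 <= MM k P t X Y.
Proof. by apply: sumr_ge0 => u _; rewrite divr_ge0 ?ler0n. Qed.

Lemma oa_eq (R : realFieldType) T (k : T -> T -> R) n (I : finType) (P : I -> T)
  (X Y : 'I_n -> T) (s : seq R) :
  strong_kernel k -> (forall a, exists u, X a = P u) ->
  path <=%R 0 s -> (forall a b, k (X a) (Y b) \in s) ->
  oa_kernel k X Y = GG k P (lev 0 s) X Y.
Proof.
move=> Hk HX Hs Hv.
have Hdec : forall sg : 'S_n, \sum_(i < n) k (X i) (Y (sg i)) =
    \sum_(q <- lev 0 s) q.1 * (NN k q.2 X Y sg)%:R.
  move=> sg; transitivity (\sum_(i < n) \sum_(q <- lev 0 s) q.1 * (nat_of_bool (q.2 <= k (X i) (Y (sg i))))%:R).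
    apply: eq_bigr => i _; rewrite lev_dec // ?subr0 //.
    by case: Hk => _ H _.
  rewrite exchange_big /=; apply: eq_bigr => q _.
  by rewrite /NN natr_sum mulr_sumr.
have Gge0 : 0 <= GG k P (lev 0 s) X Y.
  rewrite /GG big_seq; apply: sumr_ge0 => q Hq.
  by rewrite mulr_ge0 ?MM_ge0 // (lev_ge0 Hs Hq).
have [so Hso] := exist_opt Y Hk HX (path_sorted Hs).
apply/eqP; rewrite eq_le; apply/andP; split.
  rewrite /oa_kernel; apply: bigmax_le => // sg _.
  rewrite Hdec /GG big_seq [X in _ <= X]big_seq; apply: ler_sum => q Hq.
  by apply: ler_wpM2l; [exact: (lev_ge0 Hs Hq) | exact: A_le].
rewrite /oa_kernel; apply: le_trans (le_bigmax _ _ so).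
rewrite Hdec /GG le_eqVlt; apply/orP; left; apply/eqP; rewrite !big_seq.
by apply: eq_bigr => q Hq; rewrite Hso // (lev_mem Hq).
Qed.

Lemma sum_lt n c : (\sum_(r < n) nat_of_bool (r < c))%N = minn n c.
Proof.
elim: n => [|n IH]; first by rewrite big_ord0 min0n.
rewrite big_ord_recr /= IH; case: (ltnP n c) => H /=; lia.
Qed.

Lemma minn_sum n a b : (a <= n)%N -> (b <= n)%N ->
  minn a b = (\sum_(r < n) nat_of_bool ((r < a) && (r < b)))%N.
Proof.
move=> Ha Hb; under eq_bigr do rewrite -leq_min.
by rewrite sum_lt; lia.
Qed.

Definition psdf (R : realFieldType) m (K : 'I_m -> 'I_m -> R) :=
  forall c : 'I_m -> R, 0 <= \sum_(i < m) \sum_(j < m) c i * c j * K i j.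

Lemma psd_ext (R : realFieldType) m (K K' : 'I_m -> 'I_m -> R) :
  (forall i j, K i j = K' i j) -> psdf K' -> psdf K.
Proof.
move=> E H c; have := H c.
by under eq_bigr do under eq_bigr do rewrite -E.
Qed.

Lemma psd_sum (R : realFieldType) m (J : Type) (r : seq J) (Pr : pred J)
  (F : J -> 'I_m -> 'I_m -> R) :
  (forall x, Pr x -> psdf (F x)) -> psdf (fun i j => \sum_(x <- r | Pr x) F x i j).
Proof.
move=> H c /=.
under eq_bigr do under eq_bigr do rewrite mulr_sumr.
under eq_bigr do rewrite exchange_big.
rewrite exchange_big; apply: sumr_ge0 => x Hx; exact: H.
Qed.

Lemma psd_scale (R : realFieldType) m (w : R) (K : 'I_m -> 'I_m -> R) :
  0 <= w -> psdf K -> psdf (fun i j => w * K i j).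
Proof.
move=> Hw H c /=.
under eq_bigr do under eq_bigr do rewrite mulrCA.
under eq_bigr do rewrite -mulr_sumr.
by rewrite -mulr_sumr mulr_ge0.
Qed.

Lemma psd_rank1 (R : realFieldType) m (f : 'I_m -> R) : psdf (fun i j => f i * f j).
Proof.
move=> c /=.
under eq_bigr do under eq_bigr do rewrite mulrACA.
under eq_bigr do rewrite -mulr_sumr.
by rewrite -mulr_suml -expr2 sqr_ge0.
Qed.

Lemma oa_sym (R : realFieldType) T (k : T -> T -> R) n (x y : 'I_n -> T) :
  strong_kernel k -> oa_kernel k x y <= oa_kernel k y x.
Proof.
move=> Hk; rewrite /oa_kernel; apply: bigmax_le.
  apply: le_trans (le_bigmax _ _ 1%g); apply: sumr_ge0 => i _.
  by case: Hk => _ H _.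
move=> sg _; apply: le_trans (le_bigmax _ _ (sg^-1)%g).
rewrite (reindex_inj (@perm_inj _ (sg^-1)%g)) /= le_eqVlt; apply/orP; left.
by apply/eqP; apply: eq_bigr => j _; rewrite permKV (sk_sym Hk).
Qed.

Theorem corollary1 (R : realFieldType) (T : Type) (k : T -> T -> R) (n : nat) :
  strong_kernel k ->
  (forall x y : 'I_n -> T, nsubset x -> nsubset y ->
     oa_kernel k x y = oa_kernel k y x) /\
  (forall (m : nat) (X : 'I_m -> 'I_n -> T) (c : 'I_m -> R),
     (forall i, nsubset (X i)) ->
     0 <= \sum_(i < m) \sum_(j < m) c i * c j * oa_kernel k (X i) (X j)).
Proof.
move=> Hk; split.
  by move=> x y _ _; apply/eqP; rewrite eq_le !oa_sym.
move=> m X c _.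
pose P := fun u : ('I_m * 'I_n)%type => X u.1 u.2.
pose s := sort <=%R [seq k (P u) (P v) | u <- enum [set: 'I_m * 'I_n], v <- enum [set: 'I_m * 'I_n]].
have Hs : path <=%R 0 s.
  rewrite path_min_sorted; first by apply: sort_sorted => x y; exact: le_total.
  apply/allP => v; rewrite mem_sort => /allpairsP [[u w] [_ _ ->]].
  by case: Hk => _ H _.
suff : psdf (fun i j => oa_kernel k (X i) (X j)) by apply.
apply: (psd_ext (K' := fun i j => \sum_(q <- lev 0 s | q \in lev 0 s) \sum_(u : ('I_m * 'I_n)%type) \sum_(r < n)
   (q.1 / (cls k P q.2 u)%:R) *
   ((nat_of_bool (r < cnt k q.2 (X i) (P u))%N)%:R * (nat_of_bool (r < cnt k q.2 (X j) (P u))%N)%:R))).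
  move=> i j.
  rewrite (@oa_eq _ _ k n _ P (X i) (X j) s Hk _ Hs); first last.
  - move=> a b; rewrite mem_sort.
    by apply/allpairsP; exists ((i, a), (j, b)); rewrite !mem_enum !inE.
  - by move=> a; exists (i, a).
  rewrite /GG -big_seq; apply: eq_bigr => q _.
  rewrite /MM mulr_sumr; apply: eq_bigr => u _.
  rewrite (minn_sum (cnt_le _ _ _ _) (cnt_le _ _ _ _)) natr_sum mulr_suml mulr_sumr.
  apply: eq_bigr => r _.
  by rewrite -natrM mulnb mulrCA mulrC.
apply: psd_sum => q Hq; apply: psd_sum => u _; apply: psd_sum => r _.
apply: psd_scale; last exact: psd_rank1.
by rewrite divr_ge0 ?ler0n // (lev_ge0 Hs Hq).
Qed.
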